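(* Let $\delta<\mathfrak t$ and let $\langle\bar\eta^\alpha:\alpha<\delta\rangle$ be a $\le^*$-increasing sequence of members of $\mathbf S$ (i.e. $\bar\eta^\alpha\le^*\bar\eta^\beta$ for $\alpha<\beta<\delta$). Then there is $\bar\eta\in\mathbf S$ with $\bar\eta^\alpha\le^*\bar\eta$ for all $\alpha<\delta$.
   Context: $\mathfrak t$ is the least length $\kappa$ of a sequence $\langle X_\alpha:\alpha<\kappa\rangle$ of infinite subsets of $\omega$ with $X_\beta\setminus X_\alpha$ finite for $\alpha<\beta$ and no infinite $X$ with $X\setminus X_\alpha$ finite for all $\alpha$. $\mathbf S$ is the family of all sequences $\bar\eta=\langle\eta_n:n\in B\rangle$ with $B\subseteq\omega$ infinite such that for each $n\in B$, $\eta_n$ is a function from the interval $[n,k)$ to $\{0,1\}$ for some $k\in(n,\omega)$; $\mathrm{dom}(\bar\eta)=B$. $\eta\trianglelefteq\nu$ means $\nu$ extends $\eta$. For $\bar\eta,\bar\nu\in\mathbf S$, $\bar\eta\le^*\bar\nu$ means that for all sufficiently large $n$, if $n\in\mathrm{dom}(\bar\nu)$ then $n\in\mathrm{dom}(\bar\eta)$ and $\eta_n\trianglelefteq\nu_n$. *)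

(* Defs.v *)
From Stdlib Require Import Arith.

Definition infinite_set (X : nat -> Prop) : Prop :=
  forall m, exists n, m <= n /\ X n.

Definition finite_set (X : nat -> Prop) : Prop :=
  exists m, forall n, X n -> n < m.

Definition almost_sub (X Y : nat -> Prop) : Prop :=
  finite_set (fun n => X n /\ ~ Y n).

Definition well_order {I : Type} (lt : I -> I -> Prop) : Prop :=
  (forall a, ~ lt a a) /\
  (forall a b c, lt a b -> lt b c -> lt a c) /\
  (forall a b, lt a b \/ a = b \/ lt b a) /\
  well_founded lt.

Definition is_tower {J : Type} (ltJ : J -> J -> Prop) (X : J -> nat -> Prop) : Prop :=
  (forall a, infinite_set (X a)) /\
  (forall a b, ltJ a b -> almost_sub (X b) (X a)) /\
  ~ (exists Y : nat -> Prop, infinite_set Y /\ forall a, almost_sub Y (X a)).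

(* The order type of (I, ltI) is < t : no ordinal gamma <= that order type
   (i.e. no well-order order-embeddable into (I, ltI)) is the length of a tower. *)
Definition below_t {I : Type} (ltI : I -> I -> Prop) : Prop :=
  forall (J : Type) (ltJ : J -> J -> Prop) (f : J -> I),
    well_order ltJ ->
    (forall a b, ltJ a b -> ltI (f a) (f b)) ->
    forall X : J -> nat -> Prop, ~ is_tower ltJ X.

(* An element eta = <eta_n : n in B>: sdom = B, for n in B, eta_n is the function
   i |-> sval n i on the interval [n, stop n) (values outside are irrelevant). *)
Record Sseq := mkSseq {
  sdom : nat -> Prop;
  stop : nat -> nat;
  sval : nat -> nat -> bool
}.

Definition in_S (e : Sseq) : Prop :=
  infinite_set (sdom e) /\ forall n, sdom e n -> n < stop e n.

Definition seg_ext (e v : Sseq) (n : nat) : Prop :=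
  stop e n <= stop v n /\
  forall i, n <= i -> i < stop e n -> sval e n i = sval v n i.

Definition le_star (e v : Sseq) : Prop :=
  exists N, forall n, N <= n -> sdom v n -> sdom e n /\ seg_ext e v n.

(* Main.v *)
Require Import Defs.
From Stdlib Require Import Arith.
From Stdlib Require Import Lia Classical ClassicalEpsilon FunctionalExtensionality ProofIrrelevance Wellfounded Cantor.

Lemma almost_sub_intro (X Y : nat -> Prop) m :
  (forall n, m <= n -> X n -> Y n) -> almost_sub X Y.
Proof.
  intros H. exists m. intros n [Hx Hy].
  destruct (Nat.lt_ge_cases n m); auto. exfalso; apply Hy, H; auto.
Qed.

Lemma almost_sub_elim (X Y : nat -> Prop) :
  almost_sub X Y -> exists m, forall n, m <= n -> X n -> Y n.
Proof.
  intros [m Hm]. exists m. intros n Hn Hx.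
  destruct (classic (Y n)) as [|Hy]; auto.
  specialize (Hm n (conj Hx Hy)). lia.
Qed.

Lemma pseudo_int (I : Type) (ltI : I -> I -> Prop) (J : Type)
  (ltJ : J -> J -> Prop) (f : J -> I) :
  below_t ltI -> well_order ltJ -> (forall a b, ltJ a b -> ltI (f a) (f b)) ->
  forall X : J -> nat -> Prop, (forall a, infinite_set (X a)) ->
  (forall a b, ltJ a b -> almost_sub (X b) (X a)) ->
  exists Y, infinite_set Y /\ forall a, almost_sub Y (X a).
Proof.
  intros Hb Hw Hm X Hi Hd. apply NNPP. intro Hn.
  apply (Hb J ltJ f Hw Hm X). split; [|split]; auto.
Qed.

Fixpoint seqs (nx : nat -> nat) (f : nat -> nat) (k : nat) : nat :=
  match k with
  | 0 => nx 0
  | S k => nx (S (Nat.max (seqs nx f k) (f (seqs nx f k))))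
  end.

Lemma thin (P : nat -> Prop) (f : nat -> nat) : infinite_set P ->
  exists Q, infinite_set Q /\ (forall n, Q n -> P n) /\
    (forall x y, Q x -> Q y -> x < y -> f x < y).
Proof.
  intros HP.
  set (nx := fun m => proj1_sig (constructive_indefinite_description _ (HP m))).
  assert (Hnx : forall m, m <= nx m /\ P (nx m)).
  { intro m. unfold nx. destruct constructive_indefinite_description; auto. }
  set (s := seqs nx f).
  assert (Hs1 : forall k, f (s k) < s (S k) /\ s k < s (S k)).
  { intro k. unfold s; simpl. destruct (Hnx (S (Nat.max (seqs nx f k) (f (seqs nx f k))))). lia. }
  assert (Hle : forall i j, i <= j -> s i <= s j).
  { intros i j Hij. induction Hij. lia. specialize (Hs1 m). lia. }
  assert (Hk : forall k, k <= s k).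
  { induction k. lia. specialize (Hs1 k); lia. }
  exists (fun n => exists k, s k = n). split; [|split].
  - intro m. exists (s m). split; eauto.
  - intros n [k <-]. destruct k; unfold s; simpl; apply Hnx.
  - intros x y [i <-] [j <-] Hxy.
    destruct (Nat.lt_ge_cases i j) as [Hij|Hij].
    + specialize (Hle (S i) j Hij). specialize (Hs1 i). lia.
    + specialize (Hle j i Hij). lia.
Qed.

Lemma line (h : nat -> nat) K : exists M, forall c, c < K -> h c < M.
Proof.
  induction K as [|K [M HM]].
  - exists 0. intros; lia.
  - exists (Nat.max M (S (h K))). intros c Hc.
    destruct (Nat.eq_dec c K) as [->|Hne]; [lia|].
    specialize (HM c ltac:(lia)). lia.
Qed.

Lemma box (h : nat -> nat -> nat) (K : nat -> nat) N :
  exists M, forall n c, n < N -> c < K n -> h n c < M.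
Proof.
  induction N as [|N [M HM]].
  - exists 0. intros; lia.
  - destruct (line (h N) (K N)) as [M1 HM1].
    exists (Nat.max M M1). intros n c Hn Hc.
    destruct (Nat.eq_dec n N) as [->|Hne].
    + specialize (HM1 c Hc). lia.
    + specialize (HM n c ltac:(lia) Hc). lia.
Qed.

Lemma testbit_S a i : Nat.testbit a (S i) = Nat.testbit (Nat.div2 a) i.
Proof. reflexivity. Qed.

Fixpoint enc (k : nat) (v : nat -> bool) : nat :=
  match k with
  | 0 => 0
  | S k => 2 * enc k (fun i => v (S i)) + Nat.b2n (v 0)
  end.

Lemma enc_spec k : forall v, enc k v < 2 ^ k /\
  forall i, i < k -> Nat.testbit (enc k v) i = v i.
Proof.
  induction k as [|k IH]; intro v.
  - split; [simpl; lia | intros; lia].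
  - destruct (IH (fun i => v (S i))) as [H1 H2]. change (enc (S k) v) with (2 * enc k (fun i => v (S i)) + Nat.b2n (v 0)). split.
    + rewrite Nat.pow_succ_r'. destruct (v 0); simpl Nat.b2n; lia.
    + intros i Hi. destruct i as [|i].
      * change (Nat.testbit ?x 0) with (Nat.odd x). destruct (v 0); simpl Nat.b2n.
        -- apply Nat.odd_odd.
        -- rewrite Nat.add_0_r. apply Nat.odd_even.
      * rewrite testbit_S. destruct (v 0); simpl Nat.b2n.
        -- rewrite Nat.div2_odd'. apply H2. lia.
        -- rewrite Nat.add_0_r, Nat.div2_double. apply H2. lia.
Qed.

Theorem lemma2p7 (I : Type) (ltI : I -> I -> Prop) (eta : I -> Sseq) :
  well_order ltI ->
  below_t ltI ->
  (forall a, in_S (eta a)) ->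
  (forall a b, ltI a b -> le_star (eta a) (eta b)) ->
  exists e : Sseq, in_S e /\ forall a, le_star (eta a) e.
Proof.
  intros Hwo Hbt HS Hinc.
  destruct (classic (inhabited I)) as [[a0]|HnI].
  2:{ exists (mkSseq (fun _ => True) S (fun _ _ => true)). split.
      - split; simpl; [intro m; exists m; auto | intros; lia].
      - intro a; exfalso; apply HnI; constructor; exact a. }
  pose proof Hwo as (Hirr & Htr & Htot & Hwf).
  assert (HB : exists B, infinite_set B /\ forall a, almost_sub B (sdom (eta a))).
  { apply (pseudo_int I ltI I ltI (fun x => x) Hbt Hwo (fun a b h => h)).
    - intro a; apply (HS a).
    - intros a b Hab. destruct (Hinc a b Hab) as [N HN].
      apply (almost_sub_intro _ _ N). intros n Hn Hd. apply (HN n Hn Hd). }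
  destruct HB as [B [HBi HBs]].
  pose (good := fun a (Y : nat -> Prop) =>
    forall x y, Y x -> Y y -> x < y -> stop (eta a) x < y).
  pose (Spec := fun a (h : forall b, ltI b a -> nat -> Prop) (Y : nat -> Prop) =>
     infinite_set Y /\ (forall n, Y n -> B n) /\
     (forall b (p : ltI b a), almost_sub Y (h b p)) /\ good a Y).
  pose (F := fun a h => epsilon (inhabits (fun _ : nat => True)) (Spec a h)).
  pose (X := Fix Hwf (fun _ => nat -> Prop) F).
  assert (HXeq : forall a, X a = F a (fun b _ => X b)).
  { intro a. unfold X.
    assert (Hext : forall (x : I) (f g : forall y : I, ltI y x -> nat -> Prop),
      (forall (y : I) (p : ltI y x), f y p = g y p) -> F x f = F x g).
    { intros x f g Hfg.
      assert (f = g) as ->; [|reflexivity].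
      apply functional_extensionality_dep; intro y.
      apply functional_extensionality; intro p; apply Hfg. }
    exact (Fix_eq Hwf (fun _ => nat -> Prop) F Hext a). }
  assert (HX : forall a, Spec a (fun b _ => X b) (X a)).
  { intro a. induction a as [a IH] using (well_founded_ind Hwf).
    rewrite HXeq. unfold F. apply epsilon_spec.
    assert (HP : exists P, infinite_set P /\ (forall n, P n -> B n) /\
                 forall b, ltI b a -> almost_sub P (X b)).
    { destruct (classic (exists b, ltI b a)) as [[b0 Hb0]|Hno].
      - destruct (pseudo_int I ltI {b : I | ltI b a}
          (fun x y => ltI (proj1_sig x) (proj1_sig y)) (@proj1_sig _ _) Hbt)
          with (X := fun b : {b : I | ltI b a} => X (proj1_sig b)) as [Y [HYi HYs]].
        + split; [|split; [|split]].
          * intros [x hx]; simpl; apply Hirr.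
          * intros [x hx] [y hy] [z hz]; simpl; apply Htr.
          * intros [x hx] [y hy]; simpl. destruct (Htot x y) as [H|[H|H]]; auto.
            right; left. subst. f_equal. apply proof_irrelevance.
          * apply (wf_inverse_image _ _ ltI (@proj1_sig I (fun b => ltI b a)) Hwf).
        + auto.
        + intros [b hb]; apply (IH b hb).
        + intros [b hb] [c hc] Hbc. simpl in *. apply (IH c hc). exact Hbc.
        + exists (fun n => Y n /\ B n).
          destruct (almost_sub_elim _ _ (HYs (exist _ b0 Hb0))) as [m0 Hm0].
          destruct (IH b0 Hb0) as [_ [HXB _]]. simpl in Hm0.
          split; [|split].
          * intro m. destruct (HYi (m + m0)) as [n [Hn Yn]]. exists n.
            split; [lia|]. split; auto. apply HXB, Hm0; auto; lia.
          * intros n [_ Hn]; auto.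
          * intros b Hb. destruct (almost_sub_elim _ _ (HYs (exist _ b Hb))) as [m1 Hm1].
            apply (almost_sub_intro _ _ m1). intros n Hn [Yn _]. apply Hm1; auto.
      - exists B. split; [auto|split; [auto|]]. intros b Hb; exfalso; eauto. }
    destruct HP as [P [HPi [HPB HPs]]].
    destruct (thin P (stop (eta a)) HPi) as [Q [HQi [HQP HQg]]].
    exists Q. split; [auto|split; [|split]].
    - intros n Qn; apply HPB, HQP, Qn.
    - intros b p. destruct (almost_sub_elim _ _ (HPs b p)) as [m Hm].
      apply (almost_sub_intro _ _ m). intros n Hn Qn. apply Hm; auto.
    - exact HQg. }
  destruct (pseudo_int I ltI I ltI (fun x => x) Hbt Hwo (fun a b h => h) X) as [Z [HZi HZs]].
  - intro a; apply (HX a).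
  - intros a b Hab. apply (proj1 (proj2 (proj2 (HX b))) a Hab).
  -
  pose (g := fun n => epsilon (inhabits 0) (fun y => n < y /\ Z y)).
  assert (Hg : forall n, n < g n /\ Z (g n)).
  { intro n. unfold g. apply epsilon_spec. destruct (HZi (S n)) as [y [Hy1 Hy2]].
    exists y; split; [lia|auto]. }
  assert (Hbound : forall a, exists M, forall n, M <= n -> Z n ->
             sdom (eta a) n /\ stop (eta a) n < g n).
  { intro a. destruct (almost_sub_elim _ _ (HZs a)) as [M1 H1].
    destruct (almost_sub_elim _ _ (HBs a)) as [M2 H2].
    destruct (HX a) as [_ [HXB [_ HXg]]].
    exists (M1 + M2). intros n Hn Zn. destruct (Hg n) as [Hg1 Hg2]. split.
    - apply H2; [lia|]. apply HXB, H1; [lia|auto].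
    - apply HXg; [apply H1; [lia|auto] | apply H1; [lia|auto] | auto]. }
  pose (Pw := fun a n c => sdom (eta a) n /\ stop (eta a) n <= g n /\ c < 2 ^ g n /\
        forall i, n <= i -> i < stop (eta a) n -> sval (eta a) n i = Nat.testbit c i).
  pose (W := fun a k => Pw a (fst (of_nat k)) (snd (of_nat k))).
  destruct (pseudo_int I ltI I ltI (fun x => x) Hbt Hwo (fun a b h => h) W) as [V [HVi HVs]].
  + intros a m. destruct (Hbound a) as [M HM]. destruct (HZi (m + M)) as [n [Hn Zn]].
    destruct (HM n ltac:(lia) Zn) as [Hd Hst].
    destruct (enc_spec (g n) (fun i => sval (eta a) n i)) as [He1 He2].
    exists (to_nat (n, enc (g n) (fun i => sval (eta a) n i))). split.
    * pose proof (to_nat_non_decreasing n (enc (g n) (fun i => sval (eta a) n i))). lia.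
    * unfold W. rewrite cancel_of_to. simpl. split; [auto|split; [lia|split; [auto|]]].
      intros i Hi1 Hi2. rewrite He2; auto; lia.
  + intros a b Hab. destruct (Hinc a b Hab) as [N HN].
    destruct (box (fun n c => to_nat (n,c)) (fun n => 2 ^ g n) N) as [M HM].
    exists M. intros k [Hk1 Hk2]. unfold W in *. destruct (of_nat k) as [n c] eqn:Ek.
    simpl in *. destruct Hk1 as [Hd [Hst [Hc Hv]]].
    destruct (Nat.lt_ge_cases n N) as [HnN|HnN].
    * rewrite <- (cancel_to_of k), Ek. apply HM; auto.
    * exfalso. apply Hk2. destruct (HN n HnN Hd) as [Hda [Hse Hsv]].
      split; [auto|split; [lia|split; [auto|]]].
      intros i Hi1 Hi2. rewrite Hsv; auto. apply Hv; lia.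
  + pose (ch := fun n => epsilon (inhabits 0) (fun c => V (to_nat (n, c)))).
    exists (mkSseq (fun n => exists c, V (to_nat (n,c))) g (fun n i => Nat.testbit (ch n) i)).
    split.
    * split; cbn [sdom stop].
      -- intro m.
         destruct (almost_sub_elim _ _ (HVs a0)) as [M0 H0].
         destruct (box (fun n c => to_nat (n,c)) (fun n => 2 ^ g n) m) as [M HM].
         destruct (HVi (M0 + M)) as [k [Hk Vk]].
         pose proof (H0 k ltac:(lia) Vk) as Wk. unfold W in Wk.
         destruct (of_nat k) as [n c] eqn:Ek. simpl in Wk. destruct Wk as [_ [_ [Hc _]]].
         destruct (Nat.lt_ge_cases n m) as [Hnm|Hnm].
         ++ exfalso. assert (Hlt : to_nat (n,c) < M) by (apply HM; auto).
            cbv beta in Hlt. rewrite <- Ek, cancel_to_of in Hlt. lia.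
         ++ exists n. split; auto. exists c.
            assert (Hkc : to_nat (n,c) = k) by (rewrite <- Ek; apply cancel_to_of).
            rewrite Hkc. auto.
      -- intros n _. apply Hg.
    * intro a. destruct (almost_sub_elim _ _ (HVs a)) as [M HM]. exists M.
      intros n Hn [c Hc]. simpl.
      assert (Hch : V (to_nat (n, ch n))) by (unfold ch; apply epsilon_spec; eauto).
      assert (Wk : W a (to_nat (n, ch n))).
      { apply HM; auto. pose proof (to_nat_non_decreasing n (ch n)). lia. }
      unfold W in Wk. rewrite cancel_of_to in Wk. simpl in Wk.
      destruct Wk as [Hd [Hst [_ Hv]]].
      split; auto. split; auto.
Qed.
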